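(* Let $G_1$ be a finite additive group of order $v$ with a subgroup $H$ of order $h$. If there exists a $(G_1,H,k,1)$-BRDF and a nested $(h,k,1)$-BIBD, then there exists a nested $(v,k,1)$-BIBD.
   Context: A $(G,H,k,\lambda)$-RDF is a collection of $k$-subsets of $G$ (base blocks) whose differences $x-y$ ($x\ne y$ in a common base block) cover every element of $G\setminus H$ exactly $\lambda$ times and no element of $H$; it is a BRDF if moreover all base blocks are disjoint from $H$ and the base blocks and their negatives are pairwise disjoint. A $(v,k,\lambda)$-BIBD is a set $X$ of $v$ points with a multiset $\mathcal{A}$ of $k$-subsets such that every pair of distinct points lies in exactly $\lambda$ blocks (partial: at most $\lambda$); it is nested if there is $\phi:\mathcal{A}\to X$ such that $\{A\cup\{\phi(A)\}:A\in\mathcal{A}\}$ is the block multiset of a partial $(v,k+1,\lambda+1)$-BIBD on $X$ (in particular $\phi(A)\notin A$). *)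

(* Defs.v *)
From HB Require Import structures.
From mathcomp Require Import all_boot all_order all_algebra all_fingroup.
Set Implicit Arguments. Unset Strict Implicit. Unset Printing Implicit Defensive.
Import GRing.Theory.
Local Open Scope ring_scope.

Definition diff_count (G : finZmodType) (B : {set G}) (g : G) : nat :=
  #|[set p : G * G | [&& p.1 \in B, p.2 \in B, p.1 != p.2 & p.1 - p.2 == g]]|.

Definition total_diff (G : finZmodType) (F : seq {set G}) (g : G) : nat :=
  (\sum_(B <- F) diff_count B g)%N.

Definition is_rdf (G : finZmodType) (H : {set G}) (k lam : nat)
    (F : seq {set G}) : Prop :=
  (forall B, B \in F -> #|B| = k) /\
  (forall g : G, total_diff F g = (if g \in H then 0 else lam)%N).

Definition negset (G : finZmodType) (B : {set G}) : {set G} :=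
  [set - x | x in B].

Definition is_brdf (G : finZmodType) (H : {set G}) (k lam : nat)
    (F : seq {set G}) : Prop :=
  is_rdf H k lam F /\
  (forall B, B \in F -> [disjoint B & H]) /\
  (let L := F ++ map (@negset G) F in
   forall i j : nat, (i < size L)%N -> (j < size L)%N -> i != j ->
     [disjoint nth set0 L i & nth set0 L j]).

Definition is_partial_bibd (X : finType) (v k lam : nat) (Bs : seq {set X}) : Prop :=
  #|X| = v /\ (forall A, A \in Bs -> #|A| = k) /\
  (forall x y : X, x != y -> (count (fun A : {set X} => (x \in A) && (y \in A)) Bs <= lam)%N).

Definition is_bibd (X : finType) (v k lam : nat) (Bs : seq {set X}) : Prop :=
  #|X| = v /\ (forall A, A \in Bs -> #|A| = k) /\
  (forall x y : X, x != y -> count (fun A : {set X} => (x \in A) && (y \in A)) Bs = lam).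

(* nested: phi assigns to each block (by position) a point phi(A) not in A,
   and the blocks A ∪ {phi(A)} form a partial (v,k+1,lam+1)-BIBD. *)
Definition is_nested_bibd (X : finType) (v k lam : nat) (Bs : seq {set X}) : Prop :=
  is_bibd v k lam Bs /\
  exists phi : seq X, size phi = size Bs /\
    (forall p, p \in zip Bs phi -> p.2 \notin p.1) /\
    is_partial_bibd v k.+1 lam.+1 [seq p.2 |: p.1 | p <- zip Bs phi].

(* Main.v *)
Require Import Defs.
From HB Require Import structures.
From mathcomp Require Import all_boot all_order all_algebra all_fingroup.
Set Implicit Arguments. Unset Strict Implicit. Unset Printing Implicit Defensive.
Import GRing.Theory.
Local Open Scope ring_scope.

Lemma count_sumE (T : Type) (a : pred T) (s : seq T) :
  count a s = (\sum_(x <- s) a x)%N.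
Proof. by elim: s => [|x s IH]; rewrite ?big_nil ?big_cons //= IH. Qed.

Lemma count_allpairsE (S T U : Type) (f : S -> T -> U) (a : pred U) s t :
  count a [seq f x y | x <- s, y <- t] =
  (\sum_(x <- s) count (fun y => a (f x y)) t)%N.
Proof.
elim: s => [|x s IH]; first by rewrite big_nil.
by rewrite big_cons /= count_cat count_map IH.
Qed.

Lemma count_enumE (T : finType) (a : pred T) :
  count a (enum T) = #|[set x | a x]|.
Proof.
rewrite count_sumE big_enum /= -sum1_card [RHS]big_mkcond /=.
by apply: eq_bigr => i _; rewrite inE; case: (a i).
Qed.

Lemma memD (G : finZmodType) (B : {set G}) g x :
  (x \in [set a + g | a in B]) = (x - g \in B).
Proof.
apply/imsetP/idP => [[a aB ->]|xB]; first by rewrite addrK.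
by exists (x - g); rewrite ?subrK.
Qed.

Lemma cardD (G : finZmodType) (B : {set G}) g :
  #|[set a + g | a in B]| = #|B|.
Proof. exact: card_imset (addIr g). Qed.

Lemma subBB (G : finZmodType) (x y g : G) : (x - g) - (y - g) = x - y.
Proof. by rewrite opprB addrA subrK. Qed.

Lemma devcard (G : finZmodType) (B : {set G}) x y : x != y ->
  #|[set g : G | (x \in [set a + g | a in B]) && (y \in [set a + g | a in B])]|
  = diff_count B (x - y).
Proof.
move=> xy.
have inj : injective (fun g : G => (x - g, y - g)).
  by move=> g1 g2 [] /addrI /oppr_inj.
rewrite /diff_count -(card_imset _ inj); apply: eq_card => -[a c].
rewrite inE /=; apply/imsetP/idP.
- move=> [g]; rewrite inE !memD => /andP[ha hc] [-> ->].
  by rewrite ha hc (inj_eq (addIr _)) xy subBB eqxx.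
- case/and4P=> ha hc _ /eqP e.
  have hx : x - (x - a) = a by rewrite opprB addrC subrK.
  have hy : y - (x - a) = c by rewrite -[c](subKr a) e !opprB addrCA.
  by exists (x - a); rewrite ?inE ?memD hx hy ?ha ?hc.
Qed.

Lemma disj_count (G : finType) (L : seq {set G}) (d : G) :
  (forall i j : nat, (i < size L)%N -> (j < size L)%N -> i != j ->
     [disjoint nth set0 L i & nth set0 L j]) ->
  (count (fun S : {set G} => d \in S) L <= 1)%N.
Proof.
elim: L => [|S L IH] //= hd.
have hL : (count (fun S : {set G} => d \in S) L <= 1)%N.
  by apply: IH => i j hi hj ij; apply: (hd i.+1 j.+1).
case dS: (d \in S) => //=.
rewrite add1n ltnS leqn0 -/(nilp _) eqn0Ngt -has_count.
apply/hasPn => T TL; have hj := TL; rewrite -index_mem in hj.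
have := hd 0%N (index T L).+1 erefl hj erefl; rewrite /= nth_index //.
by move/disjointFr => ->.
Qed.

Lemma diff_count0 (G : finZmodType) (B : {set G}) (d : G) :
  (diff_count ((0%R : G) |: B) d <= diff_count B d + (d \in B) + (- d \in B))%N.
Proof.
rewrite /diff_count.
set S0 := [set p : G * G | _].
set S1 := [set p : G * G | _].
set S2 := [set p : G * G | (p.1 \in B) && (p == (d, 0))].
set S3 := [set p : G * G | (p.2 \in B) && (p == (0, - d))].
have c2 : (#|S2| <= (d \in B))%N.
  case dB: (d \in B).
    by rewrite /= -(cards1 ((d, 0%R) : G * G)); apply: subset_leq_card; apply/subsetP => p; rewrite !inE => /andP[].
  rewrite leqn0 cards_eq0; apply/eqP/setP => p; rewrite !inE.
  by apply/negbTE; apply/andP => -[pB /eqP pe]; move: pB; rewrite pe dB.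
have c3 : (#|S3| <= (- d \in B))%N.
  case dB: (- d \in B).
    by rewrite /= -(cards1 ((0%R, - d) : G * G)); apply: subset_leq_card; apply/subsetP => p; rewrite !inE => /andP[].
  rewrite leqn0 cards_eq0; apply/eqP/setP => p; rewrite !inE.
  by apply/negbTE; apply/andP => -[pB /eqP pe]; move: pB; rewrite pe dB.
apply: (leq_trans (n := #|S1 :|: S2 :|: S3|)).
  apply: subset_leq_card; apply/subsetP => -[a c].
  rewrite /S0 /S1 /S2 /S3 !inE /= !xpair_eqE.
  case/and4P => ha hc ac /eqP e.
  case/orP: ha => [/eqP a0|ha]; case/orP: hc => [/eqP c0|hc].
  - by move: ac; rewrite a0 c0 eqxx.
  - have cd : c = - d by rewrite -e a0 sub0r opprK.
    by rewrite hc a0 cd !eqxx !orbT.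
  - have ad : a = d by rewrite -e c0 subr0.
    by rewrite ha c0 ad !eqxx !orbT.
  - by rewrite ha hc ac e eqxx.
apply: (leq_trans (leq_card_setU _ _)).
apply: leq_add; last exact: c3.
apply: (leq_trans (leq_card_setU _ _)); exact: leq_add.
Qed.
Lemma Hadd (G : finZmodType) (H : {group G}) a b : a \in H -> b \in H -> a + b \in H.
Proof. by move=> ha hb; apply: groupM. Qed.
Lemma Hopp (G : finZmodType) (H : {group G}) a : a \in H -> - a \in H.
Proof. by move=> ha; have := groupVr ha. Qed.
Lemma H0 (G : finZmodType) (H : {group G}) : (0%R : G) \in H.
Proof. exact: group1. Qed.
Lemma Hsub (G : finZmodType) (H : {group G}) a b : a \in H -> b \in H -> a - b \in H.
Proof. by move=> ha hb; apply: Hadd ha (Hopp hb). Qed.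

Definition rep (G : finZmodType) (H : {group G}) (z : G) : G :=
  odflt z [pick w | w - z \in H].

Lemma repP (G : finZmodType) (H : {group G}) z : rep H z - z \in H.
Proof.
rewrite /rep; case: pickP => [w //|/(_ z)]; by rewrite subrr H0.
Qed.

Lemma rep_eq (G : finZmodType) (H : {group G}) z z' : z - z' \in H -> rep H z = rep H z'.
Proof.
move=> hz; rewrite /rep (@eq_pick _ _ (fun w => w - z' \in H)).
  by case: pickP => [//|/(_ z')]; rewrite subrr H0.
move=> w /=; apply/idP/idP => hw.
  by have := Hadd hw hz; rewrite -addrA addKr.
have := Hsub hw hz; by rewrite opprB addrA subrK.
Qed.

Lemma rep_idem (G : finZmodType) (H : {group G}) z : rep H (rep H z) = rep H z.
Proof. exact/rep_eq/repP. Qed.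

Lemma rep_char (G : finZmodType) (H : {group G}) x t :
  ((x - t \in H) && (rep H t == t)) = (t == rep H x).
Proof.
apply/andP/eqP => [[hx /eqP <-]|->].
  by apply/esym/rep_eq; have := Hopp hx; rewrite opprB.
by rewrite rep_idem eqxx; have := Hopp (repP H x); rewrite opprB.
Qed.

Definition ccond (G : finZmodType) (H : {group G}) (x y t : G) : bool :=
  (x - t \in H) && (y - t \in H).

Lemma rep_sum (G : finZmodType) (H : {group G}) (x y : G) :
  (\sum_(t | rep H t == t) ccond H x y t)%N = nat_of_bool (x - y \in H).
Proof.
rewrite /ccond.
case hxy: (x - y \in H).
  have hr : rep H (rep H x) == rep H x by rewrite rep_idem.
  rewrite (bigD1 (rep H x)) ?rep_idem //= big1.
    have hx : x - rep H x \in H by have := Hopp (repP H x); rewrite opprB.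
    have hy : y - rep H x \in H.
      by have := Hadd (Hopp hxy) hx; rewrite opprB addrA subrK.
    by rewrite hx hy.
  move=> t /andP[ht ntx].
  case hxt: (x - t \in H) => //=.
  by move: ntx; have := rep_char H x t; rewrite hxt ht => /= /esym/eqP ->; rewrite eqxx.
rewrite big1 // => t _.
case hxt: (x - t \in H) => //=; case hyt: (y - t \in H) => //=.
by have := Hsub hxt hyt; rewrite subBB hxy.
Qed.
Lemma memtr (G : finZmodType) (H : {group G}) (X : finType) (f : X -> G) (g : G -> X)
  (fH : forall a, f a \in H) (gf : cancel f g) (fg : {in H, cancel g f})
  (A : {set X}) t x :
  (x \in [set f a + t | a in A]) = (x - t \in H) && (g (x - t) \in A).
Proof.
apply/imsetP/andP => [[a aA ->]|[hx ha]]; first by rewrite addrK gf fH.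
by exists (g (x - t)) => //; rewrite fg ?subrK.
Qed.

Lemma cardtr (G : finZmodType) (X : finType) (f : X -> G) (g : G -> X)
  (gf : cancel f g) (A : {set X}) t :
  #|[set f a + t | a in A]| = #|A|.
Proof. by apply: card_imset => a b /addIr /(can_inj gf). Qed.

Lemma coscount (G : finZmodType) (H : {group G}) (X : finType) (f : X -> G) (g : G -> X)
  (fH : forall a, f a \in H) (gf : cancel f g) (fg : {in H, cancel g f})
  (L : seq {set X}) t x y :
  count (fun A : {set X} => (x \in [set f a + t | a in A]) && (y \in [set f a + t | a in A])) L
  = if ccond H x y t then count (fun A : {set X} => (g (x - t) \in A) && (g (y - t) \in A)) L
    else 0%N.
Proof.
rewrite /ccond; case: ifP => hc.
  by apply: eq_count => A; rewrite !(memtr fH gf fg); case/andP: hc => -> ->.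
rewrite (@eq_count _ _ pred0) ?count_pred0 // => A; rewrite !(memtr fH gf fg) /=.
by move: hc; case: (x - t \in H); case: (y - t \in H); rewrite //= andbF.
Qed.

Lemma bij_H (G : finZmodType) (H : {group G}) (X : finType) : #|X| = #|H| ->
  exists (f : X -> G) (g : G -> X),
    [/\ forall a, f a \in H, cancel f g & {in H, cancel g f}].
Proof.
move=> e.
exists (fun a => enum_val (cast_ord e (enum_rank a))).
exists (fun z => enum_val (cast_ord (esym e) (enum_rank_in (H0 H) z))).
split.
- move=> a; exact: enum_valP.
- by move=> a /=; rewrite enum_valK_in cast_ordK enum_rankK.
- by move=> z zH /=; rewrite enum_valK cast_ordKV enum_rankK_in.
Qed.

Lemma dev_count1 (G : finZmodType) (F : seq {set G}) (x y : G) : x != y ->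
  count (fun p : {set G} * G => (x \in p.1) && (y \in p.1))
    [seq ([set a + g | a in B], g) | B : {set G} <- F, g : G <- enum G] = total_diff F (x - y).
Proof.
move=> xy; rewrite count_allpairsE /total_diff; apply: eq_bigr => B _.
by rewrite count_enumE devcard.
Qed.

Lemma dev_count2 (G : finZmodType) (F : seq {set G}) (x y : G) : x != y ->
  count (fun p : {set G} * G => (x \in p.2 |: p.1) && (y \in p.2 |: p.1))
    [seq ([set a + g | a in B], g) | B : {set G} <- F, g : G <- enum G]
  = (\sum_(B <- F) diff_count ((0%R : G) |: B) (x - y)%R)%N.
Proof.
move=> xy; rewrite count_allpairsE; apply: eq_bigr => B _.
rewrite count_enumE -devcard //; apply: eq_card => g; rewrite !inE /=.
by rewrite imsetU1 add0r !inE.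
Qed.

Lemma mem_negset (G : finZmodType) (B : {set G}) d : (d \in negset B) = (- d \in B).
Proof.
apply/imsetP/idP => [[a aB ->]|hd]; first by rewrite opprK.
by exists (- d); rewrite ?opprK.
Qed.

Lemma dev_bound (G : finZmodType) (H : {group G}) k (F : seq {set G}) (d : G) :
  is_brdf H k 1 F ->
  (\sum_(B <- F) diff_count ((0%R : G) |: B) d <= if d \in H then 0 else 2)%N.
Proof.
move=> [[Fk Fd] [FH FL]].
apply: (@leq_trans (\sum_(B <- F) (diff_count B d + (d \in B) + (- d \in B)))%N).
  by apply: leq_sum => B _; exact: diff_count0.
rewrite !big_split /= -!count_sumE.
have -> : count (fun B : {set G} => - d \in B) F =
          count (fun B : {set G} => d \in B) (map (@negset G) F).
  by rewrite count_map; apply: eq_count => B /=; rewrite mem_negset.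
have := Fd d; rewrite /total_diff => ->.
case dH: (d \in H).
  have c1 : count (fun B : {set G} => d \in B) F = 0%N.
    apply/eqP; rewrite -leqn0 leqNgt -has_count; apply/hasPn => B BF.
    by rewrite (disjointFl (FH B BF) dH).
  have c2 : count (fun B : {set G} => d \in B) (map (@negset G) F) = 0%N.
    apply/eqP; rewrite -leqn0 leqNgt -has_count; apply/hasPn => B' /mapP [B BF ->].
    by rewrite mem_negset (disjointFl (FH B BF) (Hopp dH)).
  by rewrite c1 c2.
rewrite -addnA add1n ltnS -count_cat.
exact: disj_count.
Qed.

Lemma cos_count1 (G : finZmodType) (H : {group G}) (X : finType) (f : X -> G) (g : G -> X)
  (fH : forall a, f a \in H) (gf : cancel f g) (fg : {in H, cancel g f})
  (Bs : seq {set X}) (phi : seq X) (x y : G) :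
  size Bs = size phi -> x != y ->
  (forall a b : X, a != b -> count (fun A : {set X} => (a \in A) && (b \in A)) Bs = 1%N) ->
  count (fun p : {set G} * G => (x \in p.1) && (y \in p.1))
    [seq ([set f a + t | a in q.1], f q.2 + t) | t <- enum [pred t | rep H t == t],
                                                  q : {set X} * X <- zip Bs phi]
  = nat_of_bool (x - y \in H).
Proof.
move=> hs xy hc; rewrite count_allpairsE -rep_sum big_enum /=.
apply: eq_bigr => t _.
have -> : count (fun q : {set X} * X => (x \in [set f a + t | a in q.1]) && (y \in [set f a + t | a in q.1])) (zip Bs phi)
  = count (fun A : {set X} => (x \in [set f a + t | a in A]) && (y \in [set f a + t | a in A])) Bs.
  by rewrite -{2}(@unzip1_zip _ _ Bs phi) ?hs // count_map.
rewrite (coscount fH gf fg); case: ifP => // hcc; apply: hc.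
apply/eqP => /(congr1 f); case/andP: hcc => hx hy; rewrite !fg // => /addIr /eqP.
by rewrite (negbTE xy).
Qed.

Lemma cos_count2 (G : finZmodType) (H : {group G}) (X : finType) (f : X -> G) (g : G -> X)
  (fH : forall a, f a \in H) (gf : cancel f g) (fg : {in H, cancel g f})
  (Bs : seq {set X}) (phi : seq X) (x y : G) :
  x != y ->
  (forall a b : X, a != b -> (count (fun A : {set X} => (a \in A) && (b \in A))
        [seq p.2 |: p.1 | p <- zip Bs phi] <= 2)%N) ->
  leq (count (fun p : {set G} * G => (x \in p.2 |: p.1) && (y \in p.2 |: p.1))
    [seq ([set f a + t | a in q.1], f q.2 + t) | t <- enum [pred t | rep H t == t],
                                                  q : {set X} * X <- zip Bs phi])
   (muln (nat_of_bool (x - y \in H)) 2).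
Proof.
move=> xy hc; rewrite count_allpairsE -rep_sum big_enum /= big_distrl /=.
apply: leq_sum => t _.
have -> : count (fun q : {set X} * X => (x \in f q.2 + t |: [set f a + t | a in q.1]) && (y \in f q.2 + t |: [set f a + t | a in q.1])) (zip Bs phi)
  = count (fun A : {set X} => (x \in [set f a + t | a in A]) && (y \in [set f a + t | a in A])) [seq p.2 |: p.1 | p <- zip Bs phi].
  by rewrite count_map; apply: eq_count => q /=; rewrite imsetU1.
rewrite (coscount fH gf fg); case: ifP => // hcc; rewrite mul1n; apply: hc.
apply/eqP => /(congr1 f); case/andP: hcc => hx hy; rewrite !fg // => /addIr /eqP.
by rewrite (negbTE xy).
Qed.

Theorem mainTheorem15 (G1 : finZmodType) (H : {group G1}) (v h k : nat) :
  #|G1| = v -> #|H| = h ->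
  (exists F : seq {set G1}, is_brdf H k 1 F) ->
  (exists (X : finType) (Bs : seq {set X}), is_nested_bibd h k 1 Bs) ->
  exists (X : finType) (Bs : seq {set X}), is_nested_bibd v k 1 Bs.
Proof.
move=> hv hh [F hF] [X0 [Bs0 [[hX0 [Bk0 Bc0]] [phi0 [hsz0 [hphi0 [_ [Nk0 Nc0]]]]]]]].
have hF' := hF; move: hF' => [[Fk Fd] [FH FL]].
have [f [g [fH gf fg]]] := bij_H (X := X0) (H := H) (etrans hX0 (esym hh)).
set QD := [seq ([set a + g0 | a in B], g0) | B : {set G1} <- F, g0 : G1 <- enum G1].
set QC := [seq ([set f a + t | a in q.1], f q.2 + t) | t <- enum [pred t | rep H t == t],
                                                  q : {set X0} * X0 <- zip Bs0 phi0].
have hQ : forall p, p \in QD ++ QC -> #|p.1| = k /\ p.2 \notin p.1.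
  move=> p; rewrite mem_cat => /orP[] /allpairsP [[a b] [/= ha hb ->]] /=.
    split; first by rewrite cardD Fk.
    by rewrite memD subrr (disjointFl (FH a ha) (H0 H)).
  split.
    rewrite (cardtr gf); apply: Bk0.
    by rewrite -(@unzip1_zip _ _ Bs0 phi0) ?hsz0 //; apply: map_f.
  rewrite (memtr fH gf fg) addrK gf fH /=; exact: hphi0.
exists G1, (unzip1 (QD ++ QC)); split.
  split; first by [].
  split; first by move=> A /mapP [p pQ ->]; case: (hQ p pQ).
  move=> x y xy.
  have -> : count (fun A : {set G1} => (x \in A) && (y \in A)) (unzip1 (QD ++ QC)) =
    (count (fun p : {set G1} * G1 => (x \in p.1) && (y \in p.1)) QD +
     count (fun p : {set G1} * G1 => (x \in p.1) && (y \in p.1)) QC)%N.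
    by rewrite count_map count_cat.
  rewrite dev_count1 // (cos_count1 fH gf fg (esym hsz0) xy) ?Fd; last first.
    by move=> a b ab; apply: Bc0.
  by case: (x - y \in H).
exists (unzip2 (QD ++ QC)); split; first by rewrite !size_map.
rewrite zip_unzip; split; first by move=> p pQ; case: (hQ p pQ).
split; first by [].
split.
  move=> A /mapP [p pQ ->]; case: (hQ p pQ) => c1 c2.
  by rewrite cardsU1 c2 c1.
move=> x y xy.
have -> : count (fun A : {set G1} => (x \in A) && (y \in A))
   [seq p.2 |: p.1 | p <- QD ++ QC] =
  (count (fun p : {set G1} * G1 => (x \in p.2 |: p.1) && (y \in p.2 |: p.1)) QD +
   count (fun p : {set G1} * G1 => (x \in p.2 |: p.1) && (y \in p.2 |: p.1)) QC)%N.
  by rewrite count_map count_cat.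
rewrite dev_count2 //.
have d1 := dev_bound (x - y) hF.
have d2 := cos_count2 fH gf fg xy (fun a b ab => Nc0 a b ab).
move: d1 d2; case: (x - y \in H) => /= d1 d2.
  exact: (leq_trans (leq_add d1 d2)).
exact: (leq_trans (leq_add d1 d2)).
Qed.
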